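(* Given $\delta\ge 0$, $D\ge 0$ and $R\ge 0$ there is a constant $D'$ such that the following holds. Let $X$ be a $\delta$-hyperbolic graph (with its natural graph metric) in which every vertex has valence at most $D$, and let $u$ be a vertex of $X$. Let $A\subseteq\partial X$ be a set such that for any three distinct points $\xi_1,\xi_2,\xi_3\in A$, some barycenter of $(\xi_1,\xi_2,\xi_3)$ lies in the closed ball $B(u;R)$, i.e. $\mathrm{Bary}_X(\xi_1,\xi_2,\xi_3)\cap B(u;R)\neq\emptyset$. Then the cardinality of $A$ is at most $D'$.
   Context: For a proper $\delta$-hyperbolic geodesic space $X$ with Gromov boundary $\partial X$, any two distinct $\xi_1\neq\xi_2\in\partial X$ are joined by a bi-infinite geodesic $(\xi_1,\xi_2)$. There are constants $D_0(\delta),R_0(\delta)\ge0$ depending only on $\delta$ such that for every triple of distinct points $\xi_1,\xi_2,\xi_3\in\partial X$ there is a point $x\in X$ whose $D_0(\delta)$-neighborhood meets each of the geodesics $(\xi_i,\xi_j)$, $i\ne j$, and any two such points are within distance $R_0(\delta)$. Any such point is called a barycenter of $(\xi_1,\xi_2,\xi_3)$, and $\mathrm{Bary}_X(\xi_1,\xi_2,\xi_3)$ denotes the (coarsely well-defined) set of barycenters. *)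

(* Defs.v *)
From Stdlib Require Import Reals ZArith List ClassicalEpsilon.
Open Scope R_scope.

Section Graph.
Context {V : Type} (adj : V -> V -> Prop).

Inductive reach : V -> V -> nat -> Prop :=
| reach0 x : reach x x 0
| reachS x y z n : adj x y -> reach y z n -> reach x z (S n).

Definition symmetric_rel : Prop := forall x y, adj x y -> adj y x.
Definition irreflexive_rel : Prop := forall x, ~ adj x x.
Definition connected_graph : Prop := forall x y, exists n, reach x y n.

(* combinatorial graph distance = minimal length of a walk (for connected graphs) *)
Definition gdist (x y : V) : nat :=
  epsilon (inhabits 0%nat)
    (fun n => reach x y n /\ forall m, reach x y m -> (n <= m)%nat).
Definition graph_dist (x y : V) : R := INR (gdist x y).

Definition valence_le (D : R) : Prop :=
  forall v (l : list V), NoDup l -> (forall w, In w l -> adj v w) ->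
    INR (length l) <= D.

Definition gromov_product (w x y : V) : R :=
  (graph_dist x w + graph_dist y w - graph_dist x y) / 2.

Definition hyperbolic (delta : R) : Prop :=
  forall w x y z,
    Rmin (gromov_product w x z) (gromov_product w y z) - delta
      <= gromov_product w x y.

Definition geodesic_ray (r : nat -> V) : Prop :=
  forall m n, graph_dist (r m) (r n) = Rabs (INR m - INR n).

Definition bi_geodesic (g : Z -> V) : Prop :=
  forall a b, graph_dist (g a) (g b) = Rabs (IZR a - IZR b).

(* finite Hausdorff distance: equivalence of rays (same point of the Gromov boundary) *)
Definition asymptotic (r s : nat -> V) : Prop :=
  exists K, (forall m, exists n, graph_dist (r m) (s n) <= K) /\
            (forall n, exists m, graph_dist (r m) (s n) <= K).

Definition joins (g : Z -> V) (r1 r2 : nat -> V) : Prop :=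
  bi_geodesic g /\
  asymptotic (fun t => g (- Z.of_nat t)%Z) r1 /\
  asymptotic (fun t => g (Z.of_nat t)) r2.

Definition near_geodesic (D0 : R) (x : V) (r1 r2 : nat -> V) : Prop :=
  exists g, joins g r1 r2 /\ exists t, graph_dist x (g t) <= D0.

Definition barycenter (D0 : R) (x : V) (r1 r2 r3 : nat -> V) : Prop :=
  near_geodesic D0 x r1 r2 /\ near_geodesic D0 x r1 r3 /\
  near_geodesic D0 x r2 r3.

End Graph.

(* Main.v *)
Require Import Defs.
From Stdlib Require Import Reals ZArith List ClassicalEpsilon.
From Stdlib Require Import Classical Lra Lia.
Open Scope R_scope.

Lemma abs_bounds (x : R) : - Rabs x <= x <= Rabs x.
Proof. unfold Rabs; destruct (Rcase_abs x); lra. Qed.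

Lemma exists_nat_gt (x : R) : exists N : nat, x < INR N.
Proof.
  destruct (archimed (Rabs x)) as [H1 _].
  exists (Z.to_nat (up (Rabs x))).
  pose proof (abs_bounds x).
  assert (0 <= Rabs x) by apply Rabs_pos.
  assert (0 < IZR (up (Rabs x))) by lra.
  apply lt_0_IZR in H2.
  rewrite INR_IZR_INZ, Z2Nat.id by lia. lra.
Qed.

Section M.
Context {V : Type} (adj : V -> V -> Prop) (Hsym : symmetric_rel adj)
  (Hconn : connected_graph adj).

Notation d := (graph_dist adj).
Notation gp := (gromov_product adj).

Lemma reach_app x y z a b : reach adj x y a -> reach adj y z b -> reach adj x z (a+b).
Proof. induction 1; simpl; auto. intros; econstructor; eauto. Qed.

Lemma reach_snoc x y z n : reach adj x y n -> adj y z -> reach adj x z (S n).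
Proof.
  intros H1 H2. replace (S n) with (n+1)%nat by lia. eapply reach_app; eauto.
  econstructor; eauto. constructor.
Qed.

Lemma reach_rev x y n : reach adj x y n -> reach adj y x n.
Proof. induction 1. constructor. eapply reach_snoc; eauto. Qed.

Lemma reach_S_inv x z n : reach adj x z (S n) -> exists y, adj x y /\ reach adj y z n.
Proof. intros H; inversion H; eauto. Qed.

Lemma min_exists x y : exists n, reach adj x y n /\ forall m, reach adj x y m -> (n <= m)%nat.
Proof.
  destruct (Hconn x y) as [n Hn]. revert Hn. induction n as [n IH] using lt_wf_ind.
  intros Hn.
  destruct (classic (exists m, (m < n)%nat /\ reach adj x y m)) as [[m [Hm1 Hm2]]|Hno].
  - exact (IH m Hm1 Hm2).
  - exists n; split; auto. intros m Hm. destruct (le_lt_dec n m); auto.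
    exfalso; apply Hno; eauto.
Qed.

Lemma gdist_spec x y : reach adj x y (gdist adj x y) /\
  forall m, reach adj x y m -> (gdist adj x y <= m)%nat.
Proof. unfold gdist. apply epsilon_spec. apply min_exists. Qed.

Lemma gdist_sym x y : gdist adj x y = gdist adj y x.
Proof.
  destruct (gdist_spec x y) as [H1 H2]. destruct (gdist_spec y x) as [H3 H4].
  apply reach_rev in H1. apply reach_rev in H3.
  specialize (H2 _ H3). specialize (H4 _ H1). lia.
Qed.

Lemma gdist_tri x y z : (gdist adj x z <= gdist adj x y + gdist adj y z)%nat.
Proof.
  destruct (gdist_spec x y) as [H1 _]. destruct (gdist_spec y z) as [H3 _].
  destruct (gdist_spec x z) as [_ H]. apply H. eapply reach_app; eauto.
Qed.

Lemma d_sym x y : d x y = d y x.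
Proof. unfold graph_dist. now rewrite gdist_sym. Qed.

Lemma d_tri x y z : d x z <= d x y + d y z.
Proof. unfold graph_dist. rewrite <- plus_INR. apply le_INR, gdist_tri. Qed.

Lemma d_nonneg x y : 0 <= d x y.
Proof. apply pos_INR. Qed.

Lemma gp_sym u x y : gp u x y = gp u y x.
Proof. unfold gromov_product. rewrite (d_sym x y). lra. Qed.

Lemma G1 g u K a b c : bi_geodesic adj g -> d u (g a) <= K -> (a <= b)%Z -> (b <= c)%Z ->
  gp u (g b) (g c) >= IZR b - IZR a - K.
Proof.
  intros Hg Hk Hab Hbc. unfold gromov_product.
  apply IZR_le in Hab. apply IZR_le in Hbc.
  pose proof (Hg b a). pose proof (Hg c a). pose proof (Hg b c).
  rewrite Rabs_right in H by lra. rewrite Rabs_right in H0 by lra.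
  rewrite Rabs_left1 in H1 by lra.
  pose proof (d_tri (g b) u (g a)). pose proof (d_tri (g c) u (g a)). lra.
Qed.

Lemma G2 g u K a b c : bi_geodesic adj g -> d u (g a) <= K -> (b <= a)%Z -> (a <= c)%Z ->
  gp u (g b) (g c) <= K.
Proof.
  intros Hg Hk Hab Hbc. unfold gromov_product.
  apply IZR_le in Hab. apply IZR_le in Hbc.
  pose proof (Hg b a). pose proof (Hg c a). pose proof (Hg b c).
  rewrite Rabs_left1 in H by lra. rewrite Rabs_right in H0 by lra.
  rewrite Rabs_left1 in H1 by lra.
  pose proof (d_tri (g b) (g a) u). pose proof (d_tri (g c) (g a) u).
  rewrite (d_sym u (g a)) in Hk. lra.
Qed.

Lemma G3 u x y C : d x y <= C -> gp u x y >= d x u - C.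
Proof.
  intros H. unfold gromov_product. pose proof (d_tri x y u). lra.
Qed.

Lemma far g u K t0 s : bi_geodesic adj g -> d u (g t0) <= K ->
  Rabs (IZR s - IZR t0) - K <= d (g s) u <= Rabs (IZR s - IZR t0) + K.
Proof.
  intros Hg Hk. pose proof (Hg s t0). pose proof (d_tri (g s) u (g t0)).
  pose proof (d_tri (g s) (g t0) u). rewrite (d_sym (g t0) u) in H1. lra.
Qed.

Lemma core (u : V) K delta (L : nat) (r0 ri rj : nat -> V) g1 g2 g3 t1 t2 t3 :
  0 <= K -> 0 <= delta ->
  hyperbolic adj delta ->
  joins adj g1 r0 ri -> joins adj g2 r0 rj -> joins adj g3 ri rj ->
  d u (g1 t1) <= K -> d u (g2 t2) <= K -> d u (g3 t3) <= K ->
  g1 (t1 + Z.of_nat L)%Z = g2 (t2 + Z.of_nat L)%Z ->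
  INR L > 2*K + 3*delta -> False.
Proof.
  intros HK Hd Hhyp [Hg1 [_ Hb1]] [Hg2 [_ Hb2]] [Hg3 [Ha3 Hb3]] Hk1 Hk2 Hk3 Heq HL.
  destruct Hb1 as [C1 [Hb1 _]]. destruct Ha3 as [C2 [_ Ha3]].
  destruct Hb2 as [C3 [Hb2 _]]. destruct Hb3 as [C4 [_ Hb3]].
  destruct (exists_nat_gt (Rabs (IZR t1) + Rabs (IZR t2) + Rabs (IZR t3) + INR L + 2*K
     + 3*delta + Rabs C1 + Rabs C2 + Rabs C3 + Rabs C4 + 1)) as [N HN].
  pose proof (abs_bounds (IZR t1)). pose proof (abs_bounds (IZR t2)).
  pose proof (abs_bounds (IZR t3)). pose proof (abs_bounds C1).
  pose proof (abs_bounds C2). pose proof (abs_bounds C3). pose proof (abs_bounds C4).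
  pose proof (pos_INR L).
  assert (HNZ : IZR (Z.of_nat N) = INR N) by (now rewrite INR_IZR_INZ).
  assert (HLZ : IZR (Z.of_nat L) = INR L) by (now rewrite INR_IZR_INZ).
  destruct (Hb1 N) as [n1 Hn1]. destruct (Ha3 n1) as [m1 Hm1].
  destruct (Hb2 N) as [n2 Hn2]. destruct (Hb3 n2) as [m2 Hm2].
  simpl in *.
  set (A := g1 (Z.of_nat N)) in *. set (B := g2 (Z.of_nat N)) in *.
  set (A' := g3 (- Z.of_nat m1)%Z) in *. set (B' := g3 (Z.of_nat m2)) in *.
  set (y := g1 (t1 + Z.of_nat L)%Z).
  assert (HAA : d A A' <= C1 + C2).
  { pose proof (d_tri A (ri n1) A'). rewrite (d_sym (ri n1) A') in H7. lra. }
  assert (HBB : d B B' <= C3 + C4).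
  { pose proof (d_tri B (rj n2) B'). rewrite (d_sym (rj n2) B') in H7. lra. }
  assert (Ht1 : (t1 <= t1 + Z.of_nat L)%Z) by lia.
  assert (Ht1' : (t1 + Z.of_nat L <= Z.of_nat N)%Z).
  { apply le_IZR. rewrite plus_IZR, HLZ, HNZ. lra. }
  assert (Ht2' : (t2 + Z.of_nat L <= Z.of_nat N)%Z).
  { apply le_IZR. rewrite plus_IZR, HLZ, HNZ. lra. }
  assert (F1 : gp u y A >= INR L - K).
  { pose proof (G1 g1 u K t1 _ (Z.of_nat N) Hg1 Hk1 Ht1 Ht1'). rewrite plus_IZR, HLZ in H7.
    unfold y, A. lra. }
  assert (F2 : gp u y B >= INR L - K).
  { assert (Ht2 : (t2 <= t2 + Z.of_nat L)%Z) by lia.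
    pose proof (G1 g2 u K t2 _ (Z.of_nat N) Hg2 Hk2 Ht2 Ht2'). rewrite plus_IZR, HLZ in H7.
    unfold y, B. rewrite Heq. lra. }
  assert (F3 := Hhyp u A B y). rewrite (gp_sym u A y), (gp_sym u B y) in F3.
  assert (FA := far g1 u K t1 (Z.of_nat N) Hg1 Hk1). rewrite HNZ in FA. fold A in FA.
  assert (FB := far g2 u K t2 (Z.of_nat N) Hg2 Hk2). rewrite HNZ in FB. fold B in FB.
  pose proof (Rle_abs (INR N - IZR t1)). pose proof (Rle_abs (INR N - IZR t2)).
  assert (F4 := G3 u A A' _ HAA).
  assert (F5 := Hhyp u A' B A). rewrite (gp_sym u A' A) in F5.
  assert (F6 := G3 u B B' _ HBB).
  assert (F7 := Hhyp u A' B' B). rewrite (gp_sym u A' B), (gp_sym u B' B) in F7.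
  assert (HA'u : d A' u >= d A u - (C1 + C2)).
  { pose proof (d_tri A A' u). lra. }
  assert (HB'u : d B' u >= d B u - (C3 + C4)).
  { pose proof (d_tri B B' u). lra. }
  assert (P1 : (- Z.of_nat m1 <= t3)%Z).
  { destruct (Z_le_gt_dec (- Z.of_nat m1) t3) as [h|h]; auto. exfalso.
    assert (FA' := far g3 u K t3 (- Z.of_nat m1)%Z Hg3 Hk3). fold A' in FA'.
    apply Z.gt_lt in h. apply IZR_lt in h.
    assert (IZR (- Z.of_nat m1) <= 0) by (apply IZR_le; lia).
    rewrite (Rabs_right (IZR (- Z.of_nat m1) - IZR t3)) in FA' by lra. lra. }
  assert (P2 : (t3 <= Z.of_nat m2)%Z).
  { destruct (Z_le_gt_dec t3 (Z.of_nat m2)) as [h|h]; auto. exfalso.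
    assert (FB' := far g3 u K t3 (Z.of_nat m2) Hg3 Hk3). fold B' in FB'.
    apply Z.gt_lt in h. apply IZR_lt in h.
    assert (0 <= IZR (Z.of_nat m2)) by (apply IZR_le; lia).
    rewrite (Rabs_left1 (IZR (Z.of_nat m2) - IZR t3)) in FB' by lra. lra. }
  assert (F9 := G2 g3 u K t3 (- Z.of_nat m1)%Z (Z.of_nat m2) Hg3 Hk3 P1 P2). fold A' B' in F9.
  assert (M1 : Rmin (gp u y A) (gp u y B) >= INR L - K).
  { apply Rle_ge, Rmin_glb; lra. }
  assert (M2 : Rmin (gp u A A') (gp u B A) >= INR L - K - delta).
  { apply Rle_ge, Rmin_glb; [lra | rewrite (gp_sym u B A); lra]. }
  assert (M3 : Rmin (gp u B A') (gp u B B') >= INR L - K - 2*delta).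
  { apply Rle_ge, Rmin_glb; [ rewrite (gp_sym u B A'); lra | lra]. }
  lra.
Qed.

End M.

Section Ball.
Context {V : Type} (adj : V -> V -> Prop) (Hsym : symmetric_rel adj) (D : R)
  (HD : 0 <= D) (Hval : valence_le adj D).

Lemma nbr_list w : exists l, INR (length l) <= D /\ forall v, adj w v -> In v l.
Proof.
  assert (Hk : forall k l, NoDup l -> (forall v, In v l -> adj w v) ->
     D < INR (length l) + INR k ->
     exists l', INR (length l') <= D /\ forall v, adj w v -> In v l').
  { induction k; intros l Hl Hadj Hlt.
    - simpl in Hlt. pose proof (Hval w l Hl Hadj). lra.
    - destruct (classic (forall v, adj w v -> In v l)) as [Hall|Hn].
      + exists l; split; auto. apply (Hval w l); auto.
      + apply not_all_ex_not in Hn. destruct Hn as [v Hv].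
        apply imply_to_and in Hv. destruct Hv as [Hv1 Hv2].
        apply (IHk (v :: l)).
        * constructor; auto.
        * intros z [<-|Hz]; auto.
        * simpl length. rewrite S_INR. rewrite S_INR in Hlt. lra. }
  destruct (exists_nat_gt D) as [k Hk'].
  apply (Hk k nil); simpl; auto. constructor. intros v []. lra.
Qed.

Lemma flat_len (f : V -> list V) l : (forall w, INR (length (f w)) <= D) ->
  INR (length (flat_map f l)) <= INR (length l) * D.
Proof.
  intros Hf. induction l. simpl. lra.
  cbn [flat_map]. rewrite length_app, plus_INR. change (length (a :: l)) with (S (length l)).
  rewrite S_INR, Rmult_plus_distr_r. specialize (Hf a). lra.
Qed.

Lemma ball (u : V) r : exists B : list V, INR (length B) <= (1 + D) ^ r /\
  forall v k, (k <= r)%nat -> reach adj v u k -> In v B.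
Proof.
  assert (Hnb : forall w, {l | INR (length l) <= D /\ forall v, adj w v -> In v l}).
  { intros w. apply constructive_indefinite_description. apply nbr_list. }
  induction r.
  - exists (u :: nil). simpl. split. lra.
    intros v k Hk Hr. assert (k = 0%nat) by lia. subst. inversion Hr. auto.
  - destruct IHr as [B [HB1 HB2]].
    exists (B ++ flat_map (fun w => proj1_sig (Hnb w)) B). split.
    + rewrite length_app, plus_INR.
      assert (H := flat_len (fun w => proj1_sig (Hnb w)) B
                     (fun w => proj1 (proj2_sig (Hnb w)))).
      simpl pow. pose proof (pos_INR (length B)).
      assert (INR (length B) * (1 + D) <= (1 + D) ^ r * (1 + D)).
      { apply Rmult_le_compat_r; lra. }
      lra.
    + intros v k Hk Hr. apply in_or_app.
      destruct (le_lt_eq_dec _ _ Hk) as [Hlt|Heq].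
      * left. apply (HB2 v k); auto. lia.
      * right. subst k. apply reach_S_inv in Hr. destruct Hr as [w [Hvw Hw]].
        apply in_flat_map. exists w. split.
        -- apply (HB2 w r); auto.
        -- apply (proj2 (proj2_sig (Hnb w))). apply Hsym; auto.
Qed.

End Ball.

Theorem proposition2p4 :
  forall (delta D Rad D0 : R), 0 <= delta -> 0 <= D -> 0 <= Rad -> 0 <= D0 ->
  exists D' : nat,
    forall (V : Type) (adj : V -> V -> Prop),
      symmetric_rel adj -> irreflexive_rel adj -> connected_graph adj ->
      valence_le adj D -> hyperbolic adj delta ->
      forall (u : V) (n : nat) (xi : nat -> nat -> V),
        (forall i, (i < n)%nat -> geodesic_ray adj (xi i)) ->
        (forall i j, (i < n)%nat -> (j < n)%nat -> i <> j ->
           ~ asymptotic adj (xi i) (xi j)) ->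
        (forall i j k, (i < n)%nat -> (j < n)%nat -> (k < n)%nat ->
           i <> j -> i <> k -> j <> k ->
           exists x, barycenter adj D0 x (xi i) (xi j) (xi k) /\
                     graph_dist adj u x <= Rad) ->
        (n <= D')%nat.
Proof.
  intros delta D Rad D0 hd hD hR hD0.
  set (K := Rad + D0).
  destruct (exists_nat_gt (2*K + 3*delta)) as [Ln HLn].
  destruct (exists_nat_gt K) as [Kn HKn].
  destruct (exists_nat_gt ((1 + D) ^ (Ln + Kn))) as [M HM].
  exists (M + 3)%nat.
  intros V adj Hsym Hirr Hconn Hval Hhyp u n xi _ _ Hbar.
  destruct (le_lt_dec n (M + 3)) as [h|h]; auto. exfalso.
  destruct (ball adj Hsym D hD Hval u (Ln + Kn)) as [B [HB1 HB2]].
  set (P := fun i y => exists g t, joins adj g (xi 0%nat) (xi i) /\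
              graph_dist adj u (g t) <= K /\ y = g (t + Z.of_nat Ln)%Z).
  assert (HP : forall i, (1 <= i < n)%nat -> exists y, P i y).
  { intros i Hi.
    set (k := if Nat.eq_dec i 1 then 2%nat else 1%nat).
    assert (Hk : (k < n)%nat /\ k <> 0%nat /\ k <> i).
    { unfold k; destruct (Nat.eq_dec i 1); lia. }
    destruct (Hbar 0%nat i k) as [x [[[g [Hj [t Ht]]] _] Hx]]; try lia.
    exists (g (t + Z.of_nat Ln)%Z). exists g, t. split; auto. split; auto.
    pose proof (d_tri adj Hconn u x (g t)). unfold K. lra. }
  set (yf := fun i => epsilon (inhabits u) (P i)).
  assert (HPy : forall i, (1 <= i < n)%nat -> P i (yf i)).
  { intros i Hi. unfold yf. apply epsilon_spec. auto. }
  destruct (classic (ForallPairs (fun a b => yf a = yf b -> a = b) (seq 1 (n - 1)))) as [Hf|Hf].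
  - assert (Hnd := @NoDup_map_NoDup_ForallPairs _ _ yf _ Hf (seq_NoDup _ _)).
    assert (Hinc : incl (map yf (seq 1 (n - 1))) B).
    { intros v Hv. apply in_map_iff in Hv. destruct Hv as [i [<- Hi]].
      apply in_seq in Hi.
      destruct (HPy i ltac:(lia)) as [g [t [[Hg _] [Ht Hy]]]].
      rewrite Hy.
      destruct (gdist_spec adj Hconn u (g (t + Z.of_nat Ln)%Z)) as [Hr _].
      apply (reach_rev adj Hsym) in Hr.
      apply (HB2 _ (gdist adj u (g (t + Z.of_nat Ln)%Z))); auto.
      apply INR_le. rewrite plus_INR.
      pose proof (d_tri adj Hconn u (g t) (g (t + Z.of_nat Ln)%Z)).
      pose proof (Hg t (t + Z.of_nat Ln)%Z). rewrite plus_IZR, <- INR_IZR_INZ in H0.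
      replace (IZR t - (IZR t + INR Ln)) with (- INR Ln) in H0 by ring.
      rewrite Rabs_Ropp, Rabs_right in H0 by (apply Rle_ge, pos_INR).
      unfold graph_dist in *. lra. }
    pose proof (NoDup_incl_length Hnd Hinc).
    rewrite length_map, length_seq in H. apply le_INR in H.
    assert (INR (n - 1) > INR (M + 2)) by (apply lt_INR; lia).
    rewrite plus_INR in H0. simpl in H0. pose proof (pos_INR M). lra.
  - apply Hf. intros a b Ha Hb Heq. apply in_seq in Ha, Hb.
    destruct (Nat.eq_dec a b) as [|Hab]; auto. exfalso.
    destruct (HPy a ltac:(lia)) as [g1 [t1 [Hj1 [Ht1 Hy1]]]].
    destruct (HPy b ltac:(lia)) as [g2 [t2 [Hj2 [Ht2 Hy2]]]].
    destruct (Hbar 0%nat a b) as [x [[_ [_ [g3 [Hj3 [t3 Ht3]]]]] Hx]]; try lia.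
    assert (Hk3 : graph_dist adj u (g3 t3) <= K).
    { pose proof (d_tri adj Hconn u x (g3 t3)). unfold K. lra. }
    apply (core adj Hsym Hconn u K delta Ln (xi 0%nat) (xi a) (xi b) g1 g2 g3 t1 t2 t3);
      auto; try (unfold K; lra).
    rewrite <- Hy1, <- Hy2. auto.
Qed.
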